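(* For every $n\ge2$, consider all plane trees on $n$ vertices and, in each, all pairs $(u,w)$ of vertices with $w$ a proper descendant of $u$ (downward paths). Then: - the total number of such pairs is $\frac12\bigl(4^{n-1}-\binom{2n-2}{n-1}\bigr)$; - the total of $d(u,w)$ over all such pairs is $\frac{(2n-3)!}{((n-2)!)^2}$, which also equals $\binom n2 c_{n-1}$. Hence the expected length of a uniformly random downward path in a uniformly random plane tree on $n$ vertices is $$\frac{n-1}{\frac{(2n-2)!!}{(2n-3)!!}-1}=\sqrt{\frac n\pi}+\frac1\pi+O\Bigl(\frac1{\sqrt n}\Bigr).$$
   Context: General (plane) trees are rooted trees in which each vertex may have any number of children, linearly ordered. The size of a tree is its number of vertices. $d(u,w)$ is the number of edges of the path between $u$ and $w$. $c_{m}=\frac1{m+1}\binom{2m}{m}$ is the $m$th Catalan number; $c_{n-1}$ is the number of plane trees on $n$ vertices. The double factorials are $(2m)!!=2\cdot4\cdots(2m)$ and $(2m-1)!!=1\cdot3\cdots(2m-1)$. *)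

(* Defs.v *)
From Stdlib Require Import Reals.
From Stdlib Require List.
From mathcomp Require Import all_boot.

Set Implicit Arguments.
Unset Strict Implicit.
Unset Printing Implicit Defensive.

Inductive ptree : Type := Node : seq ptree -> ptree.

(* Vertices of a plane tree, encoded by their address: the sequence of child
   indices along the path from the root (root = [::]). *)
Fixpoint vertices (t : ptree) : seq (seq nat) :=
  match t with
  | Node ts =>
      [::] :: (fix aux (i : nat) (cs : seq ptree) : seq (seq nat) :=
                 match cs with
                 | [::] => [::]
                 | c :: cs' => map (cons i) (vertices c) ++ aux i.+1 cs'
                 end) 0 ts
  end.

Definition tree_size (t : ptree) : nat := size (vertices t).

Definition proper_desc (u w : seq nat) : bool := prefix u w && (u != w).

Definition dist_down (u w : seq nat) : nat := size w - size u.

Definition down_pairs (t : ptree) : seq (seq nat * seq nat) :=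
  [seq uw <- [seq (u, w) | u <- vertices t, w <- vertices t]
     | proper_desc uw.1 uw.2].

Definition npairs (t : ptree) : nat := size (down_pairs t).
Definition sumdist (t : ptree) : nat :=
  sumn [seq dist_down uw.1 uw.2 | uw <- down_pairs t].

Definition catalan (m : nat) : nat := 'C(m.*2, m) %/ m.+1.

Fixpoint dfact (n : nat) : nat :=
  match n with
  | 0 => 1
  | 1 => 1
  | (m.+1 as k).+1 => k.+1 * dfact m
  end.

Open Scope R_scope.

(* expected value of d over a uniformly random (tree, downward path) pair:
   total of d divided by the total number of pairs *)
Definition expected_len (D P : nat) : R := INR D / INR P.

Definition closed_form (n : nat) : R :=
  INR (n - 1) / (INR (dfact (2 * n - 2)) / INR (dfact (2 * n - 3)) - 1).

Close Scope R_scope.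

(* Main.v *)
Require Import Defs.
From Stdlib Require Import Reals.
From Stdlib Require List.
From Stdlib Require Import Lra Lia.
From Stdlib Require Permutation FinFun.
From Coquelicot Require Coquelicot.

Module Wallis.
Import Coquelicot.Coquelicot.

Definition W (k : nat) : R := RInt (fun x => sin x ^ k) 0 (PI / 2).

Lemma PI2_pos : 0 < PI / 2.
Proof. generalize PI_RGT_0; lra. Qed.

Lemma sink_cont k x : continuous (fun x => sin x ^ k) x.
Proof. apply (@ex_derive_continuous R_AbsRing R_NormedModule); auto_derive; auto. Qed.

Lemma ex_W k : ex_RInt (fun x => sin x ^ k) 0 (PI / 2).
Proof. apply (@ex_RInt_continuous R_CompleteNormedModule); intros; apply sink_cont. Qed.

Lemma W0 : W 0 = PI / 2.
Proof.
unfold W. simpl. rewrite RInt_const. unfold scal; simpl; unfold mult; simpl. ring.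
Qed.

Lemma W1 : W 1 = 1.
Proof.
unfold W. apply is_RInt_unique.
apply (is_RInt_ext (fun x => sin x)).
{ intros; simpl; ring. }
replace 1 with (minus ((fun x => - cos x) (PI/2)) ((fun x => - cos x) 0)).
2: { simpl; rewrite cos_PI2, cos_0; unfold minus, plus, opp; simpl; ring. }
apply (@is_RInt_derive R_CompleteNormedModule (fun x => - cos x)).
- intros x _. auto_derive; auto. ring.
- intros x _. apply (@ex_derive_continuous R_AbsRing R_NormedModule); auto_derive; auto.
Qed.

Lemma Wrec k : INR (k + 2) * W (k + 2) = INR (k + 1) * W k.
Proof.
set (F := fun x => - cos x * sin x ^ (k + 1)).
assert (H : is_RInt (fun x => INR (k + 2) * sin x ^ (k + 2) - INR (k + 1) * sin x ^ k) 0 (PI / 2)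
          (minus (F (PI/2)) (F 0))).
{ apply (@is_RInt_derive R_CompleteNormedModule F).
  - intros x _. unfold F. auto_derive; auto.
    rewrite !plus_INR; simpl.
    replace (k + 2)%nat with (S (S k)) by lia.
    replace (k + 1)%nat with (S k) by lia.
    simpl. pose proof (sin2_cos2 x) as Hs. unfold Rsqr in Hs.
    assert (Hc : cos x * cos x = 1 - sin x * sin x) by lra.
    replace (- cos x * (1 * cos x * ((INR k + 1) * sin x ^ k))) with
      (- (cos x * cos x) * ((INR k + 1) * sin x ^ k)) by ring.
    rewrite Hc. ring.
  - intros x _. apply (@ex_derive_continuous R_AbsRing R_NormedModule); auto_derive; auto. }
assert (HF : minus (F (PI/2)) (F 0) = 0).
{ unfold F; rewrite cos_PI2, cos_0, sin_0, pow_i by lia. unfold minus, plus, opp; simpl; ring. }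
rewrite HF in H.
apply (@is_RInt_unique R_CompleteNormedModule) in H.
pose proof (@RInt_correct R_CompleteNormedModule _ _ _ (ex_W (k + 2))) as H2.
pose proof (@RInt_correct R_CompleteNormedModule _ _ _ (ex_W k)) as H0.
pose proof (@is_RInt_minus R_NormedModule _ _ _ _ _ _ (@is_RInt_scal R_NormedModule _ _ _ (INR (k+2)) _ H2) (@is_RInt_scal R_NormedModule _ _ _ (INR (k+1)) _ H0)) as H3.
apply (@is_RInt_unique R_CompleteNormedModule) in H3.
unfold W. unfold minus, plus, opp, scal in H3; simpl in H3; unfold mult in H3; simpl in H3.
unfold Rminus in H. rewrite H in H3. lra.
Qed.

Lemma Wmono k : W (S k) <= W k.
Proof.
unfold W. apply RInt_le.
- left; apply PI2_pos.
- apply ex_W.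
- apply ex_W.
- intros x [H1 H2]. simpl.
  assert (Hs : 0 <= sin x) by (apply sin_ge_0; generalize PI_RGT_0; lra).
  assert (Hs1 : sin x <= 1) by (apply SIN_bound).
  assert (Hk : 0 <= sin x ^ k) by (apply pow_le; lra).
  nra.
Qed.

Fixpoint qq (m : nat) : R :=
  match m with 0 => 1 | S p => qq p * (2 * INR p + 2) / (2 * INR p + 1) end.

Lemma qq_pos m : 0 < qq m.
Proof.
induction m; simpl; [lra|].
pose proof (pos_INR m).
apply Rmult_lt_0_compat; [|apply Rinv_0_lt_compat; lra].
apply Rmult_lt_0_compat; lra.
Qed.

Lemma Weven m : W (2 * m) * qq m = PI / 2.
Proof.
induction m.
- simpl. rewrite W0. ring.
- pose proof (Wrec (2 * m)) as H. pose proof (pos_INR m).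
  assert (E1 : INR (2 * m + 2) = 2 * INR m + 2) by (rewrite plus_INR, mult_INR; simpl; ring).
  assert (E2 : INR (2 * m + 1) = 2 * INR m + 1) by (rewrite plus_INR, mult_INR; simpl; ring).
  rewrite E1, E2 in H.
  replace (2 * m + 2)%nat with (2 * S m)%nat in H by lia.
  simpl qq. rewrite <- IHm.
  replace (W (2 * S m) * (qq m * (2 * INR m + 2) / (2 * INR m + 1))) with
    ((2 * INR m + 2) * W (2 * S m) * qq m / (2 * INR m + 1)) by (field; lra).
  rewrite H. field; lra.
Qed.

Lemma Wodd m : INR (2 * m + 1) * W (2 * m + 1) = qq m.
Proof.
induction m.
- simpl. replace (0 + 1)%nat with 1%nat by lia. rewrite W1. simpl; ring.
- pose proof (Wrec (2 * m + 1)) as H.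
  replace (2 * m + 1 + 2)%nat with (2 * S m + 1)%nat in H by lia.
  replace (2 * m + 1 + 1)%nat with (2 * S m)%nat in H by lia.
  rewrite H. simpl qq. rewrite <- IHm. pose proof (pos_INR m).
  rewrite !mult_INR, !plus_INR, ?S_INR, !mult_INR. simpl. field. lra.
Qed.

Lemma wallis_upper m : qq m ^ 2 <= PI * (INR m + 1/2).
Proof.
pose proof (Wmono (2 * m)) as H.
replace (S (2 * m)) with (2 * m + 1)%nat in H by lia.
pose proof (Weven m) as He. pose proof (Wodd m) as Ho. pose proof (qq_pos m) as Hq.
pose proof (pos_INR m).
assert (E2 : INR (2 * m + 1) = 2 * INR m + 1) by (rewrite plus_INR, mult_INR; simpl; ring).
rewrite E2 in Ho.
assert (HW : W (2 * m + 1) = qq m / (2 * INR m + 1)) by (rewrite <- Ho; field; lra).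
assert (HE : W (2 * m) = PI / 2 / qq m) by (rewrite <- He; field; lra).
rewrite HW, HE in H.
apply Rmult_le_compat_r with (r := qq m * (2 * INR m + 1)) in H; [|nra].
replace (qq m / (2 * INR m + 1) * (qq m * (2 * INR m + 1))) with (qq m ^ 2) in H by (field; lra).
replace (PI / 2 / qq m * (qq m * (2 * INR m + 1))) with (PI * (INR m + 1/2)) in H by (field; lra).
exact H.
Qed.

Lemma wallis_lower m : PI * INR (S m) <= qq (S m) ^ 2.
Proof.
pose proof (Wmono (2 * m + 1)) as H.
replace (S (2 * m + 1)) with (2 * S m)%nat in H by lia.
pose proof (Weven (S m)) as He. pose proof (Wodd m) as Ho. pose proof (qq_pos (S m)) as Hq.
pose proof (qq_pos m) as Hq0.
pose proof (pos_INR m).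
assert (E2 : INR (2 * m + 1) = 2 * INR m + 1) by (rewrite plus_INR, mult_INR; simpl; ring).
rewrite E2 in Ho.
assert (HW : W (2 * m + 1) = qq m / (2 * INR m + 1)) by (rewrite <- Ho; field; lra).
assert (HE : W (2 * S m) = PI / 2 / qq (S m)) by (rewrite <- He; field; lra).
assert (HQ : qq m / (2 * INR m + 1) = qq (S m) / (2 * INR m + 2)) by (simpl; field; lra).
rewrite HW, HE, HQ in H.
apply Rmult_le_compat_r with (r := qq (S m) * (2 * INR m + 2)) in H; [|nra].
replace (PI / 2 / qq (S m) * (qq (S m) * (2 * INR m + 2))) with (PI * INR (S m)) in H
  by (rewrite S_INR; field; lra).
replace (qq (S m) / (2 * INR m + 2) * (qq (S m) * (2 * INR m + 2))) with (qq (S m) ^ 2) in H by (field; lra).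
exact H.
Qed.

End Wallis.

Open Scope R_scope.

Lemma div_bound (num den a X K M : R) : 0 < a -> a <= den -> X * den = num ->
  -K <= num <= K -> 0 <= K -> -K / a <= X <= K / a.
Proof.
intros Ha Hd HX [H1 H2] HK.
assert (Hden : 0 < den) by lra.
assert (X = num / den) by (rewrite <- HX; field; lra).
split.
- destruct (Rle_or_lt 0 X) as [Hx|Hx].
  + apply Rle_trans with 0; [|lra]. unfold Rdiv. assert (0 <= K * / a) by (apply Rmult_le_pos; [lra|left; apply Rinv_0_lt_compat; lra]). lra.
  + apply (Rmult_le_reg_r a); [lra|]. unfold Rdiv. rewrite Rmult_assoc, Rinv_l by lra.
    nra.
- destruct (Rle_or_lt X 0) as [Hx|Hx].
  + apply Rle_trans with 0; [lra|]. unfold Rdiv. apply Rmult_le_pos; [lra|left; apply Rinv_0_lt_compat; lra].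
  + apply (Rmult_le_reg_r a); [lra|]. unfold Rdiv. rewrite Rmult_assoc, Rinv_l by lra.
    nra.
Qed.

Lemma asym (P a r q s : R) : 3 < P -> P <= 4 -> 0 < s -> s * s = P -> 1 <= a -> 0 < r ->
  P * (a * a) <= r * r -> r * r <= P * (a * a + 1/2) -> 0 < q -> q * q = a * a + 1 ->
  Rabs (a * a / (r - 1) - q / s - 1 / P) <= 8 / q.
Proof.
intros HP1 HP2 Hs HsP Ha Hr Hr1 Hr2 Hq Hq2.
assert (hs1 : 17/10 <= s) by nra.
assert (hs2 : s <= 2) by nra.
assert (hr : s * a <= r) by nra.
set (t := r - s * a).
assert (ht0 : 0 <= t) by (unfold t; lra).
assert (h4 : 4 * a * r <= s * (4 * a * a + 1)).
{ assert (Hsq : (4 * a * r) * (4 * a * r) <= (s * (4 * a * a + 1)) * (s * (4 * a * a + 1))).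
  { replace ((s * (4 * a * a + 1)) * (s * (4 * a * a + 1))) with (P * ((4 * a * a + 1) * (4 * a * a + 1)))
      by (rewrite <- HsP; ring).
    nra. }
  assert (0 <= s * (4 * a * a + 1)) by nra.
  nra. }
assert (ht1 : 4 * a * t <= s) by (unfold t; nra).
assert (hq1 : a <= q) by nra.
assert (hq2 : 2 * a * q <= 2 * a * a + 1) by nra.
assert (hr1 : r - 1 > 0) by nra.
set (F := a * a / (r - 1) - a / s - 1 / P).
assert (HF : F * (P * (r - 1)) = 1 - t - a * s * t).
{ unfold F, t. rewrite <- HsP. field. split; lra. }
assert (Hat : a * t <= 1/2) by (replace (4 * a * t) with (4 * (a * t)) in ht1 by ring; lra).
assert (Hast : a * s * t <= 1) by nra.
assert (Hnum : -3 <= 1 - t - a * s * t <= 3).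
{ assert (t <= 1/2) by nra. assert (0 <= a * s * t) by (apply Rmult_le_pos; [nra|lra]). lra. }
assert (Hden : a <= P * (r - 1)) by nra.
assert (Ha0 : 0 < a) by lra. assert (H30 : 0 <= 3) by lra.
pose proof (div_bound _ _ _ F 3 0 Ha0 Hden HF Hnum H30) as [HF1 HF2].
assert (HG : - (1 / a) <= (a - q) / s <= 0).
{ split.
  - apply Rle_trans with (- (1 / (2 * a)) / 1).
    + apply Rle_trans with (- (1 / (2 * a))). 
      * apply Ropp_le_contravar. apply Rmult_le_compat_l; [lra|]. apply Rinv_le_contravar; lra.
      * lra.
    + unfold Rdiv. rewrite Rinv_1, Rmult_1_r.
      assert (Hqa : q - a <= 1 / (2 * a)) by (apply (Rmult_le_reg_l (2 * a)); [lra|]; field_simplify; lra).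
      assert (Hx : (q - a) / s <= q - a).
      { unfold Rdiv. apply Rle_trans with ((q - a) * 1); [|lra].
        apply Rmult_le_compat_l; [lra|]. rewrite <- Rinv_1. apply Rinv_le_contravar; lra. }
      replace ((a - q) * / s) with (- ((q - a) / s)) by (field; lra). lra.
  - unfold Rdiv. assert (0 < / s) by (apply Rinv_0_lt_compat; lra). nra. }
assert (Hqa2 : q <= 2 * a) by nra.
assert (H8 : 4 / a <= 8 / q).
{ apply (Rmult_le_reg_r (a * q)); [nra|]. field_simplify; lra. }
replace (a * a / (r - 1) - q / s - 1 / P) with (F + (a - q) / s) by (unfold F; field; lra).
apply Rabs_le.
assert (E3 : 3 / a + 1 / a = 4 / a) by (field; lra).
assert (E3' : -3 / a = - (3 / a)) by (field; lra).
split; lra.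
Qed.

Close Scope R_scope.

From mathcomp Require Import all_boot zify.
Set Implicit Arguments. Unset Strict Implicit. Unset Printing Implicit Defensive.

Fixpoint ptree_ind' (P : ptree -> Prop)
  (Pf : forall ts, (forall c, List.In c ts -> P c) -> P (Node ts)) (t : ptree) : P t :=
  match t with Node ts => Pf ts ((fix aux (l : seq ptree) : forall c, List.In c l -> P c :=
     match l return forall c, List.In c l -> P c with
     | [::] => fun c H => match H with end
     | c0 :: cs => fun c H => match H with
                    | or_introl E => eq_ind c0 P (ptree_ind' Pf c0) c E
                    | or_intror H' => aux cs c H' end end) ts) end.

Fixpoint vaux (i : nat) (cs : seq ptree) : seq (seq nat) :=
  match cs with [::] => [::] | c :: cs' => map (cons i) (vertices c) ++ vaux i.+1 cs' end.
Lemma vertices_node ts : vertices (Node ts) = [::] :: vaux 0 ts.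
Proof. by []. Qed.

Lemma mem_cons_map (i j : nat) (w : seq nat) (V : seq (seq nat)) :
  (j :: w \in map (cons i) V) = (j == i) && (w \in V).
Proof.
apply/mapP/andP => [[v Hv [-> ->]]|[/eqP -> Hw]]; first by [].
by exists w.
Qed.

Lemma nth_In (ts : seq ptree) k : k < size ts -> List.In (nth (Node [::]) ts k) ts.
Proof.
elim: ts k => [|c cs IH] [|k] //= Hk; [by left | right; exact: IH].
Qed.

Lemma mem_vaux i ts w : (w \in vaux i ts) =
  if w is j :: w' then (i <= j) && (j - i < size ts) && (w' \in vertices (nth (Node [::]) ts (j - i)))
  else false.
Proof.
case: w => [|j w].
  elim: ts i => [|c cs IH] i //=; rewrite mem_cat IH orbF.
  by apply/mapP => [[]].
elim: ts i => [|c cs IH] i /=; first by rewrite andbF.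
rewrite mem_cat IH mem_cons_map.
case: (ltngtP i j) => Hij /=.
- by rewrite -(subnSK Hij).
- by [].
- by subst j; rewrite subnn /= orbF.
Qed.

Lemma vaux_head i ts j w : j :: w \in vaux i ts -> i <= j.
Proof. by rewrite mem_vaux => /andP[/andP[]]. Qed.

Lemma uniq_vertices t : uniq (vertices t).
Proof.
elim/ptree_ind': t => ts IH.
rewrite vertices_node /= mem_vaux andTb.
elim: ts 0 IH => [|c cs IHc] i IH //=.
rewrite cat_uniq map_inj_uniq; last by move=> x y [].
rewrite IH /=; last by left.
rewrite IHc; last by move=> c' H; apply: IH; right.
rewrite andbT; apply/hasPn => w Hw; apply/negP => /mapP [v _ Ev]; subst w.
by move: (vaux_head Hw); rewrite ltnn.
Qed.

Lemma vertices_take t w k : w \in vertices t -> take k w \in vertices t.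
Proof.
elim/ptree_ind': t w k => ts IH w k.
rewrite vertices_node in_cons => /orP [/eqP -> | Hw]; first by case: k => [|k] /=; rewrite in_cons eqxx.
case: k => [|k]; first by rewrite take0 in_cons eqxx.
case: w Hw => [|j w] //; rewrite !mem_vaux /= subn0 => /andP [H2 H3].
rewrite /= in_cons mem_vaux /= subn0 H2 /=.
by apply: IH => //; apply: nth_In.
Qed.

Lemma filter_desc t w : w \in vertices t ->
  perm_eq [seq u <- vertices t | proper_desc u w] [seq take k w | k <- iota 0 (size w)].
Proof.
move=> Hw; apply: uniq_perm.
- by rewrite filter_uniq // uniq_vertices.
- rewrite map_inj_in_uniq ?iota_uniq // => a b; rewrite !mem_iota !add0n => Ha Hb E.
  by rewrite -(size_takel (ltnW Ha)) E size_takel // ltnW.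
move=> u; rewrite mem_filter /proper_desc; apply/andP/mapP.
- move=> [/andP [Hp Hne] _]; exists (size u).
    rewrite mem_iota add0n /=; rewrite ltn_neqAle size_prefix // andbT.
    apply/negP => /eqP Es; move: Hp; rewrite prefixE Es take_size => /eqP E.
    by rewrite E eqxx in Hne.
  by move: Hp; rewrite prefixE => /eqP ->.
- move=> [k]; rewrite mem_iota add0n /= => Hk ->.
  rewrite prefix_take vertices_take //; split => //.
  apply/negP => /eqP E; have := size_takel (ltnW Hk); rewrite E => Es.
  by rewrite Es ltnn in Hk.
Qed.

Lemma sum_down t (F : seq nat -> seq nat -> nat) :
  \sum_(uw <- down_pairs t) F uw.1 uw.2 =
  \sum_(w <- vertices t) \sum_(k <- iota 0 (size w)) F (take k w) w.
Proof.
rewrite /down_pairs big_filter big_mkcond big_allpairs /= exchange_big /=.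
rewrite big_seq_cond [RHS]big_seq_cond; apply: eq_bigr => w /andP [Hw _].
rewrite -big_mkcond -big_filter (perm_big _ (filter_desc Hw)) big_map.
by [].
Qed.


Lemma npairsE t : npairs t = \sum_(w <- vertices t) size w.
Proof.
rewrite /npairs -sum1_size.
have := sum_down t (fun _ _ => 1); rewrite /= => ->.
by apply: eq_bigr => w _; rewrite sum1_size size_iota.
Qed.

Lemma tri d : \sum_(0 <= k < d) (d - k) = 'C(d.+1, 2).
Proof.
elim: d => [|d IH]; first by rewrite big_nil.
rewrite big_nat_recl // subn0 (eq_bigr (fun k => d - k)); last by move=> i _; rewrite subSS.
by rewrite IH [RHS]binS bin1 addnC.
Qed.

Lemma sumdistE t : sumdist t = \sum_(w <- vertices t) 'C((size w).+1, 2).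
Proof.
rewrite /sumdist sumnE big_map.
rewrite (sum_down t (fun u w => dist_down u w)).
rewrite big_seq_cond [RHS]big_seq_cond; apply: eq_bigr => w /andP [Hw _].
rewrite -tri /index_iota subn0; rewrite big_seq_cond [RHS]big_seq_cond.
apply: eq_bigr => k /andP [Hk _]; rewrite /dist_down size_takel //.
by move: Hk; rewrite mem_iota add0n => /ltnW.
Qed.

Definition depthsum (g : nat -> nat) t := \sum_(w <- vertices t) g (size w).

Lemma sum_vaux (g : nat -> nat) i ts : \sum_(w <- vaux i ts) g (size w) =
  \sum_(c <- ts) \sum_(w <- vertices c) g (size w).+1.
Proof.
elim: ts i => [|c cs IH] i /=; first by rewrite !big_nil.
by rewrite big_cat IH big_cons big_map.
Qed.

Lemma depthsum_node g ts : depthsum g (Node ts) = g 0 + \sum_(c <- ts) depthsum (fun d => g d.+1) c.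
Proof.
by rewrite /depthsum vertices_node big_cons sum_vaux.
Qed.

Lemma tree_sizeE t : tree_size t = depthsum (fun _ => 1) t.
Proof. by rewrite /depthsum sum1_size. Qed.

Lemma tree_size_node ts : tree_size (Node ts) = 1 + \sum_(c <- ts) tree_size c.
Proof. by rewrite tree_sizeE depthsum_node; congr (_ + _); apply: eq_bigr => c _; rewrite tree_sizeE. Qed.

Definition fsize (f : seq ptree) := \sum_(c <- f) tree_size c.
Definition ssize (s : seq (seq ptree)) := \sum_(f <- s) fsize f.
Definition unpush (s : seq (seq ptree)) :=
  match s with cs :: f :: rest => (Node cs :: f) :: rest | _ => s end.
Fixpoint stk (k m : nat) : seq (seq (seq ptree)) :=
  match k with
  | 0 => if m is 0 then [:: [::]] else [::]
  | k'.+1 => if k'.+1 <= 2 * m then [::] else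
      map (cons [::]) (stk k' m) ++ (if m is m'.+1 then map unpush (stk k' m') else [::])
  end.

Lemma stkS k m : 2 * m < k.+1 -> stk k.+1 m =
  map (cons [::]) (stk k m) ++ (if m is m'.+1 then map unpush (stk k m') else [::]).
Proof. by move=> H /=; rewrite leqNgt H. Qed.

Lemma stk_low k m : k <= 2 * m -> 0 < m -> stk k m = [::].
Proof. by case: k => [|k] /= H; [case: m H | rewrite H]. Qed.

Lemma tree_size_pos t : 0 < tree_size t.
Proof. by case: t => ts; rewrite tree_size_node. Qed.

Lemma stk_char k m s : List.In s (stk k m) <-> k = 2 * m + size s /\ ssize s = m.
Proof.
elim: k m s => [|k IH] m s.
  case: m => [|m] /=; last by split => // [[]]; lia.
  split; first by move=> [<-|[]] //; rewrite /ssize big_nil muln0.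
  by case: s => [|f s] /= [] ? _; [left | lia].
case: (leqP k.+1 (2 * m)) => Hk.
  rewrite /= Hk; split => // [[E E2]]; case: s E E2 => [|f s] /= E E2; [move: E2; rewrite /ssize big_nil => E2; lia | lia].
rewrite stkS // List.in_app_iff; split.
- move=> [/List.in_map_iff [s' [<- /IH [E1 E2]]] |].
    split; [rewrite /=; lia | by rewrite /ssize big_cons {1}/fsize big_nil add0n -E2].
  case: m Hk => [|m] Hk //= /List.in_map_iff [s' [<- /IH [E1 E2]]].
  case: s' E1 E2 => [|cs [|f rest]] /= E1 E2; try lia.
  move: E2; rewrite /ssize !big_cons /fsize big_cons tree_size_node /=.
  move=> E2; split; lia.
- case: s => [|f rest] [E1 E2]; first by move: E1 => /= E1; lia.
  case: f E1 E2 => [|[cs] f] E1 E2.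
    left; apply/List.in_map_iff; exists rest; split => //; apply/IH.
    move: E1 E2; rewrite /ssize big_cons /fsize big_nil /= => E1 E2; split; lia.
  move: E2; rewrite /ssize !big_cons /fsize big_cons tree_size_node -/(fsize cs) -/(fsize f).
  case: m Hk E1 => [|m] Hk E1 E2; first by move: E2; lia.
  right; apply/List.in_map_iff; exists (cs :: f :: rest); split => //; apply/IH.
  rewrite /ssize !big_cons /=; split; first by move: E1 => /= E1; lia.
  move: E2; rewrite /fsize; lia.
Qed.

Lemma stk_size k m s : List.In s (stk k m) -> size s = k - 2 * m.
Proof. by move/stk_char => [-> _]; lia. Qed.

Lemma stk_nodup k m : List.NoDup (stk k m).
Proof.
elim: k m => [|k IH] m; first by case: m => [|m]; constructor => //; constructor.
case: (leqP k.+1 (2 * m)) => Hk; first by rewrite /= Hk; constructor.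
rewrite stkS //; apply: List.NoDup_app.
- by apply: FinFun.Injective_map_NoDup => // x y [].
- case: m Hk => [|m] Hk; first by constructor.
  apply: FinFun.Injective_map_NoDup_in => // x y Hx Hy.
  have Sx := stk_size Hx; have Sy := stk_size Hy.
  case: x y Sx Sy {Hx Hy} => [|cs [|f rest]] [|cs' [|f' rest']] //= Sx Sy; try lia.
  by move=> [-> -> ->].
- move=> a /List.in_map_iff [s [<- _]].
  case: m Hk => [|m] Hk //= /List.in_map_iff [s' [E Hs']].
  have Ss := stk_size Hs'.
  case: s' E Ss {Hs'} => [|cs [|f rest]] //= E Ss; try lia.
  all: by case: E.
Qed.

Lemma stk_m0 k : stk k 0 = [:: nseq k [::]].
Proof. by elim: k => [|k IH] //; rewrite stkS // IH. Qed.

Fixpoint stst (g : nat -> nat) (s : seq (seq ptree)) : nat :=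
  match s with
  | [::] => 0
  | f :: rest => \sum_(c <- f) depthsum (fun d => g (d + size rest)) c + stst g rest
  end.

Lemma eq_depthsum (g1 g2 : nat -> nat) t : (forall d, g1 d = g2 d) -> depthsum g1 t = depthsum g2 t.
Proof. by move=> H; apply: eq_bigr => w _; rewrite H. Qed.

Lemma stst_unpush g cs f rest :
  stst g (unpush [:: cs, f & rest]) = g (size rest) + stst g [:: cs, f & rest].
Proof.
rewrite /= big_cons depthsum_node add0n !addnA; congr (_ + _ + _ + _).
by apply: eq_bigr => c _; apply: eq_depthsum => d; rewrite addSnnS.
Qed.

Lemma stst_nil g k : stst g (nseq k [::]) = 0.
Proof. by elim: k => //= k ->; rewrite big_nil. Qed.

Definition Tot g k m := \sum_(s <- stk k m) stst g s.
Definition Cnt k m := size (stk k m).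

Lemma sum_in (T : Type) (F G : T -> nat) (l : seq T) :
  (forall x, List.In x l -> F x = G x) -> \sum_(x <- l) F x = \sum_(x <- l) G x.
Proof.
elim: l => [|a l IH] H; first by rewrite !big_nil.
rewrite !big_cons H; last by left.
by rewrite IH // => x Hx; apply: H; right.
Qed.

Lemma TotS g k m : 2 * m.+1 < k.+1 ->
  Tot g k.+1 m.+1 = Tot g k m.+1 + (g (k - 2 * m - 2) * Cnt k m + Tot g k m).
Proof.
move=> Hk; rewrite /Tot stkS // big_cat !big_map /=.
rewrite (eq_bigr (stst g)); last by move=> s _; rewrite big_nil.
congr (_ + _).
rewrite /Cnt -sum1_size big_distrr /= -big_split /=.
apply: sum_in => s Hs.
have := stk_size Hs.
case: s {Hs} => [|cs [|f rest]] Ss; try (move: Ss => /=; lia).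
rewrite stst_unpush muln1; congr (g _ + _); move: Ss => /=; lia.
Qed.

Lemma TotS0 g k : Tot g k.+1 0 = Tot g k 0.
Proof. by rewrite /Tot !stk_m0 !big_cons !big_nil !stst_nil. Qed.

Lemma Tot_low g k m : k <= 2 * m -> 0 < m -> Tot g k m = 0.
Proof. by move=> H1 H2; rewrite /Tot stk_low // big_nil. Qed.

Lemma Tot_m0 g k : Tot g k 0 = 0.
Proof. by rewrite /Tot stk_m0 big_cons big_nil stst_nil. Qed.

Lemma CntS k m : 2 * m.+1 < k.+1 -> Cnt k.+1 m.+1 = Cnt k m.+1 + Cnt k m.
Proof. by move=> Hk; rewrite /Cnt stkS // size_cat !size_map. Qed.

Lemma Cnt_low k m : k <= 2 * m -> 0 < m -> Cnt k m = 0.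
Proof. by move=> H1 H2; rewrite /Cnt stk_low. Qed.

Lemma Cnt_m0 k : Cnt k 0 = 1.
Proof. by rewrite /Cnt stk_m0. Qed.

Definition T N a := \sum_(a <= i < N.+1) 'C(N, i).
Definition T2 N a := \sum_(a <= i < N.+1) T N i.

Lemma tailS (F G : nat -> nat) N a : (forall i, F i.+1 = G i + G i.+1) -> G N.+1 = 0 ->
  \sum_(a.+1 <= i < N.+2) F i = \sum_(a <= i < N.+1) G i + \sum_(a.+1 <= i < N.+1) G i.
Proof.
move=> HF HG; rewrite big_add1 /= (eq_bigr (fun i => G i + G i.+1)) // big_split /=.
congr (_ + _).
have -> : \sum_(a <= i < N.+1) G i.+1 = \sum_(a.+1 <= i < N.+2) G i by rewrite big_add1.
case: (leqP a.+1 N.+1) => Ha; first by rewrite big_nat_recr //= HG addn0.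
by rewrite !big_geq // ltnW.
Qed.

Lemma T_pascal N a : T N.+1 a.+1 = T N a + T N a.+1.
Proof.
apply: tailS => [i|]; first by rewrite binS addnC.
by rewrite bin_small.
Qed.

Lemma T_recl N a : a <= N -> T N a = 'C(N, a) + T N a.+1.
Proof. by move=> H; rewrite /T big_ltn. Qed.

Lemma T_top N a : N < a -> T N a = 0.
Proof. by move=> H; rewrite /T big_geq. Qed.

Lemma T2_pascal N a : T2 N.+1 a.+1 = T2 N a + T2 N a.+1.
Proof.
apply: tailS => [i|]; first by rewrite T_pascal.
by rewrite T_top.
Qed.

Lemma T2_recl N a : a <= N -> T2 N a = T N a + T2 N a.+1.
Proof. by move=> H; rewrite /T2 big_ltn. Qed.

Lemma T2_top N a : N < a -> T2 N a = 0.
Proof. by move=> H; rewrite /T2 big_geq. Qed.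

Lemma Cnt_closed m h N b : N = 2 * m + h -> b = m + h ->
  Cnt N.+1 m + 'C(N, b.+1) = 'C(N, b).
Proof.
elim: m h N b => [|m IHm] h N b.
  move=> -> ->; rewrite Cnt_m0 bin_small ?binn //; lia.
elim: h N b => [|h IHh] [|N] [|b] HN Hb; try lia.
- have HC : Cnt N.+1 m + 'C(N, b.+2) = 'C(N, b.+1) by apply: (IHm 1); lia.
  have Hs : 'C(N, b) = 'C(N, b.+1).
    by rewrite -bin_sub; [congr 'C(_, _); lia | lia].
  rewrite CntS; last lia.
  rewrite Cnt_low //; last lia.
  rewrite (binS N b.+1) (binS N b); lia.
  have HC : Cnt N.+1 m + 'C(N, b.+2) = 'C(N, b.+1) by apply: (IHm h.+2); lia.
  have HI : Cnt N.+1 m.+1 + 'C(N, b.+1) = 'C(N, b) by apply: IHh; lia.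
  rewrite CntS; last lia.
  rewrite (binS N b.+1) (binS N b); lia.
Qed.

Lemma bin2S h : 'C(h.+2, 2) = 'C(h.+1, 2) + h.+1.
Proof. by rewrite binS bin1. Qed.

Lemma Tot1_closed m h N b : N = 2 * m + h -> b = m + h ->
  Tot succn N.+1 m = h.+1 * T N b.+1 + 'C(h.+1, 2) * 'C(N, b.+1).
Proof.
elim: m h N b => [|m IHm] h N b.
  move=> HN Hb; have H1 : N < b.+1 by lia.
  by rewrite Tot_m0 T_top // (bin_small H1) !muln0.
elim: h N b => [|h IHh] [|N] [|b] HN Hb; try lia.
- have HC : Cnt N.+1 m + 'C(N, b.+2) = 'C(N, b.+1) by apply: (Cnt_closed (h := 1)); lia.
  have HT : Tot succn N.+1 m = 2 * T N b.+2 + 'C(2, 2) * 'C(N, b.+2) by apply: (IHm 1); lia.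
  rewrite TotS; last lia.
  rewrite Tot_low //; last lia.
  rewrite HT (_ : N.+1 - 2 * m - 2 = 0); last lia.
  rewrite T_pascal (T_recl (a := b.+1)); last lia.
  rewrite -HC binn (bin_small (_ : 1 < 2)) //; lia.
- have HC : Cnt N.+1 m + 'C(N, b.+2) = 'C(N, b.+1) by apply: (Cnt_closed (h := h.+2)); lia.
  have HT : Tot succn N.+1 m = h.+3 * T N b.+2 + 'C(h.+3, 2) * 'C(N, b.+2) by apply: (IHm h.+2); lia.
  have HI : Tot succn N.+1 m.+1 = h.+1 * T N b.+1 + 'C(h.+1, 2) * 'C(N, b.+1) by apply: IHh; lia.
  rewrite TotS; last lia.
  rewrite HT HI (_ : N.+1 - 2 * m - 2 = h.+1); last lia.
  rewrite T_pascal (binS N b.+1) (T_recl (a := b.+1)); last lia.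
  rewrite -HC !bin2S; lia.
Qed.

Definition g2 d := 'C(d.+2, 2).

Lemma bin3S h : 'C(h.+3, 3) = 'C(h.+2, 3) + 'C(h.+2, 2).
Proof. by rewrite binS. Qed.

Lemma Tot2_closed m h N b : N = 2 * m + h -> b = m + h ->
  Tot g2 N.+1 m = h.+1 * T2 N b.+1 + 'C(h.+1, 2) * T N b.+1 + 'C(h.+2, 3) * 'C(N, b.+1).
Proof.
elim: m h N b => [|m IHm] h N b.
  move=> HN Hb; have H1 : N < b.+1 by lia.
  by rewrite Tot_m0 T_top // T2_top // (bin_small H1) !muln0.
elim: h N b => [|h IHh] [|N] [|b] HN Hb; try lia.
- have HC : Cnt N.+1 m + 'C(N, b.+2) = 'C(N, b.+1) by apply: (Cnt_closed (h := 1)); lia.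
  have HT : Tot g2 N.+1 m = 2 * T2 N b.+2 + 'C(2, 2) * T N b.+2 + 'C(3, 3) * 'C(N, b.+2)
    by apply: (IHm 1); lia.
  rewrite TotS; last lia.
  rewrite Tot_low //; last lia.
  rewrite HT (_ : N.+1 - 2 * m - 2 = 0); last lia.
  rewrite T2_pascal (T2_recl (a := b.+1)); last lia.
  rewrite (T_recl (a := b.+1)); last lia.
  rewrite -HC /g2 !binn (bin_small (_ : 1 < 2)) // (bin_small (_ : 2 < 3)) //; lia.
- have HC : Cnt N.+1 m + 'C(N, b.+2) = 'C(N, b.+1) by apply: (Cnt_closed (h := h.+2)); lia.
  have HT : Tot g2 N.+1 m = h.+3 * T2 N b.+2 + 'C(h.+3, 2) * T N b.+2 + 'C(h.+4, 3) * 'C(N, b.+2)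
    by apply: (IHm h.+2); lia.
  have HI : Tot g2 N.+1 m.+1 = h.+1 * T2 N b.+1 + 'C(h.+1, 2) * T N b.+1 + 'C(h.+2, 3) * 'C(N, b.+1)
    by apply: IHh; lia.
  rewrite TotS; last lia.
  rewrite HT HI (_ : N.+1 - 2 * m - 2 = h.+1); last lia.
  rewrite T2_pascal T_pascal (binS N b.+1) (T2_recl (a := b.+1)); last lia.
  rewrite (T_recl (a := b.+1)); last lia.
  rewrite /g2 -HC !bin3S !bin2S; lia.
Qed.

Definition ptrees m := map (fun s => Node (head [::] s)) (stk (2 * m).+1 m).

Lemma fsize_size f : tree_size (Node f) = (fsize f).+1.
Proof. by rewrite tree_size_node add1n. Qed.

Lemma stk1 m s : List.In s (stk (2 * m).+1 m) -> exists f, s = [:: f] /\ fsize f = m.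
Proof.
move/stk_char => [E1 E2]; case: s E1 E2 => [|f [|g s]] /= E1 E2; try lia.
by exists f; split => //; move: E2; rewrite /ssize big_cons big_nil addn0.
Qed.

Lemma ptrees_In m t : List.In t (ptrees m) <-> tree_size t = m.+1.
Proof.
split.
- move/List.in_map_iff => [s [<- /stk1 [f [-> Hf]]]] /=.
  by rewrite fsize_size Hf.
- case: t => f; rewrite fsize_size => [[Hf]].
  apply/List.in_map_iff; exists [:: f]; split => //.
  apply/stk_char; split; first by rewrite /=; lia.
  by rewrite /ssize big_cons big_nil addn0.
Qed.

Lemma ptrees_nodup m : List.NoDup (ptrees m).
Proof.
apply: FinFun.Injective_map_NoDup_in; last exact: stk_nodup.
move=> x y /stk1 [f [-> _]] /stk1 [g [-> _]] /= [->] //.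
Qed.

Lemma perm_sumn_map (X : Type) (F : X -> nat) l l' :
  Permutation.Permutation l l' -> sumn (map F l) = sumn (map F l').
Proof.
elim => //= [x l1 l2 _ -> | x y l1 | l1 l2 l3 _ -> _ ->] //.
by rewrite addnCA.
Qed.

Lemma ptrees_npairs m : sumn (map npairs (ptrees m)) = Tot succn (2 * m).+1 m.
Proof.
rewrite sumnE /ptrees -map_comp big_map /Tot.
apply: sum_in => s /stk1 [f [-> _]] /=.
rewrite npairsE (_ : \sum_(w <- vertices (Node f)) size w = depthsum id (Node f)) //.
rewrite depthsum_node /= add0n addn0; apply: eq_bigr => c _.
by apply: eq_depthsum => d; rewrite addn0.
Qed.

Lemma ptrees_sumdist m : sumn (map sumdist (ptrees m)) = Tot g2 (2 * m).+1 m.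
Proof.
rewrite sumnE /ptrees -map_comp big_map /Tot.
apply: sum_in => s /stk1 [f [-> _]] /=.
rewrite sumdistE (_ : \sum_(w <- vertices (Node f)) 'C((size w).+1, 2)
   = depthsum (fun d => 'C(d.+1, 2)) (Node f)) //.
rewrite depthsum_node /= addn0 bin_small // add0n; apply: eq_bigr => c _.
by apply: eq_depthsum => d; rewrite addn0.
Qed.

Lemma comb_sums m L : List.NoDup L -> (forall t, List.In t L <-> tree_size t = m.+1) ->
  sumn (map npairs L) = T (2 * m) m.+1 /\ sumn (map sumdist L) = T2 (2 * m) m.+1.
Proof.
move=> HL HI.
have HP : Permutation.Permutation L (ptrees m).
  apply: Permutation.NoDup_Permutation => // [|t]; first exact: ptrees_nodup.
  by rewrite HI ptrees_In.
rewrite !(perm_sumn_map _ HP) ptrees_npairs ptrees_sumdist.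
rewrite (@Tot1_closed m 0 (2 * m) m (esym (addn0 _)) (esym (addn0 _))).
rewrite (@Tot2_closed m 0 (2 * m) m (esym (addn0 _)) (esym (addn0 _))).
by rewrite (bin_small (_ : 1 < 2)) // (bin_small (_ : 2 < 3)) // !mul0n !mul1n !addn0.
Qed.

Lemma T_rec N a : T N a = 'C(N, a) + T N a.+1.
Proof.
case: (leqP a N) => H; first exact: T_recl.
by rewrite !T_top ?bin_small // ltnW.
Qed.

Lemma T2_rec N a : T2 N a = T N a + T2 N a.+1.
Proof.
case: (leqP a N) => H; first exact: T2_recl.
by rewrite !T2_top ?T_top // ltnW.
Qed.

Lemma bin_sym m : 'C((2 * m).+1, m) = 'C((2 * m).+1, m.+1).
Proof. by rewrite -bin_sub; [congr 'C(_, _); lia | lia]. Qed.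

Lemma Ppar m : 2 * T (2 * m) m.+1 + 'C(2 * m, m) = 4 ^ m.
Proof.
elim: m => [|m IH]; first by rewrite T_top.
rewrite (_ : 2 * m.+1 = (2 * m).+2); last lia.
rewrite !T_pascal.
have h1 := T_rec (2 * m) m; have h2 := T_rec (2 * m) m.+1.
have h3 := binS (2 * m).+1 m; have h4 := binS (2 * m) m; have h5 := bin_sym m.
rewrite expnS h3 h4 h5; lia.
Qed.

Lemma Kbin m : m.+1 * 'C((2 * m).+2, m.+1) = 2 * (2 * m).+1 * 'C(2 * m, m).
Proof.
have h1 := mul_bin_diag (2 * m).+2 m; have h2 := mul_bin_down (2 * m).+1 m.
rewrite /= in h1 h2; rewrite (_ : (2 * m).+1 - m = m.+1) in h2; last lia.
nia.
Qed.

Lemma Dpar m : 2 * T2 (2 * m) m.+1 = m * 'C(2 * m, m).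
Proof.
elim: m => [|m IH]; first by rewrite T2_top.
rewrite (_ : 2 * m.+1 = (2 * m).+2); last lia.
rewrite !T2_pascal.
have h1 := T2_rec (2 * m) m; have h2 := T2_rec (2 * m) m.+1.
have h3 := T_rec (2 * m) m.
have K := Kbin m.
nia.
Qed.

Lemma cat_mul m : m.+1 * catalan m = 'C(2 * m, m).
Proof.
rewrite /catalan -mul2n.
have h := mul_bin_left (2 * m) m.
rewrite (_ : 2 * m - m = m) in h; last lia.
have E : 'C(2 * m, m) = m.+1 * ('C(2 * m, m) - 'C(2 * m, m.+1)).
  rewrite mulnBr; lia.
by rewrite {1}E mulKn.
Qed.

From mathcomp Require all_algebra.
From mathcomp Require ring.
Module FP.
Import mathcomp.algebra_tactics.ring.

Lemma dfactSS k : dfact k.+2 = k.+2 * dfact k.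
Proof. by []. Qed.

Lemma dfact_even m : dfact (2 * m) = 2 ^ m * m`!.
Proof.
elim: m => [|m IH] //.
rewrite (_ : 2 * m.+1 = (2 * m).+2); last lia.
rewrite dfactSS IH expnS factS; lia.
Qed.

Lemma dfact_mul k : dfact k.+1 * dfact k = k.+1`!.
Proof.
elim: k => [|k IH] //.
rewrite dfactSS factS -IH; lia.
Qed.

Lemma bin2_mul k : 2 * 'C(k, 2) = k * k.-1.
Proof.
elim: k => [|k IH] //; case: k IH => [|k] IH //.
rewrite binS bin1 mulnDr IH /=; lia.
Qed.

Lemma partB p : T2 (2 * p.+1) p.+2 * (p`!) ^ 2 = (2 * p).+1`!.
Proof.
have HD := Dpar p.+1.
have HF := @bin_fact (2 * p.+1) p.+1 ltac:(lia).
rewrite (_ : 2 * p.+1 - p.+1 = p.+1) in HF; last lia.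
rewrite (_ : 2 * p.+1 = (2 * p).+2) in HD HF *; last lia.
rewrite (factS p) (factS (2 * p).+1) in HF.
move: HD HF; set D := T2 _ _; set C := 'C(_, _); set f := p`!; set g := (2 * p).+1`! => HD HF.
have H2 : (D * f ^ 2) * (2 * p.+1 ^ 2) = g * (2 * p.+1 ^ 2).
  transitivity ((2 * D) * (p.+1 * f * (p.+1 * f))); first ring.
  rewrite HD; transitivity (p.+1 * (C * (p.+1 * f * (p.+1 * f)))); first ring.
  rewrite HF; ring.
by move/eqP: H2; rewrite eqn_pmul2r ?muln_gt0 ?expn_gt0 // => /eqP.
Qed.

Lemma partC m : T2 (2 * m) m.+1 = 'C(m.+1, 2) * catalan m.
Proof.
have HD := Dpar m; have HC := cat_mul m; have HB := bin2_mul m.+1.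
apply/eqP; rewrite -(eqn_pmul2l (_ : 0 < 2)) //; apply/eqP.
rewrite HD mulnA HB /= -HC; ring.
Qed.

Lemma dfact_gt0 k : 0 < dfact k.
Proof.
elim: k {-2}k (leqnn k) => [|k IH] [|[|j]] //= Hj.
by rewrite muln_gt0 /=; apply: IH; lia.
Qed.

Lemma AC_rel m : dfact (2 * m.+1) * 'C(2 * m.+1, m.+1) = 4 ^ m.+1 * dfact (2 * m).+1.
Proof.
have HA := dfact_even m.+1.
have HM := dfact_mul (2 * m).+1.
have HF := @bin_fact (2 * m.+1) m.+1 ltac:(lia).
rewrite (_ : 2 * m.+1 - m.+1 = m.+1) in HF; last lia.
rewrite (_ : 2 * m.+1 = (2 * m).+2) in HA HF *; last lia.
move: HA HM HF; set A := dfact _; set B := dfact _; set C := 'C(_, _); set f := m.+1`!.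
move=> HA HM HF.
have H2 : (A * C) * (f * f) = (4 ^ m.+1 * B) * (f * f).
  transitivity (A * (C * (f * f))); first ring.
  rewrite HF -HM HA (_ : 4 ^ m.+1 = 2 ^ m.+1 * 2 ^ m.+1); last by rewrite -expnMn.
  ring.
by move/eqP: H2; rewrite eqn_pmul2r ?muln_gt0 ?fact_gt0 // => /eqP.
Qed.


End FP.
Import FP.

Open Scope R_scope.
Lemma real_id (d p c a b mm F : R) : 2*d = mm*c -> 2*p + c = F -> a*c = F*b ->
  0 < p -> 0 < b -> 0 < c -> d/p = mm/(a/b - 1).
Proof.
move=> H1 H2 H3 Hp Hb Hc.
have Ha : a = (b + 2*p*b/c).
  apply: (Rmult_eq_reg_r c); last lra.
  rewrite H3 -H2; field; lra.
have E : (a / b - 1 = 2 * p / c) by rewrite Ha; field; lra.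
rewrite E.
have Ed : d = (mm * c / 2) by lra.
rewrite Ed; field; lra.
Qed.

Lemma two_INR : 2 = INR 2.
Proof. simpl; lra. Qed.
Close Scope R_scope.
Lemma INR_eq (x y : nat) : x = y -> INR x = INR y.
Proof. by move=> ->. Qed.

Lemma part1 n L : 2 <= n -> List.NoDup L -> (forall t, List.In t L <-> tree_size t = n) ->
  let P := sumn (map npairs L) in
  let D := sumn (map sumdist L) in
  [/\ P.*2 = 4 ^ (n - 1) - 'C(2 * n - 2, n - 1),
      D * ((n - 2)`!) ^ 2 = (2 * n - 3)`!,
      D = 'C(n, 2) * catalan (n - 1)
    & expected_len D P = closed_form n].
Proof.
case: n => [|[|p]] // _ HL HI.
have [-> ->] := comb_sums (m := p.+1) HL HI.
rewrite (_ : p.+2 - 1 = p.+1); last lia.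
rewrite (_ : 2 * p.+2 - 2 = 2 * p.+1); last lia.
rewrite (_ : p.+2 - 2 = p); last lia.
rewrite (_ : 2 * p.+2 - 3 = (2 * p).+1); last lia.
split.
- have := Ppar p.+1; rewrite -mul2n; lia.
- exact: partB.
- exact: partC.
rewrite /expected_len /closed_form.
rewrite (_ : (p.+2 - 1)%N = p.+1); last lia.
rewrite (_ : (2 * p.+2 - 2)%N = 2 * p.+1); last lia.
rewrite (_ : (2 * p.+2 - 3)%N = (2 * p).+1); last lia.
have H1 := Dpar p.+1; have H2 := Ppar p.+1; have H3 := AC_rel p.
have Hpos : 0 < T (2 * p.+1) p.+2.
  rewrite T_rec (ltn_addr _ _) // bin_gt0; lia.
apply: (real_id (c := INR 'C(2 * p.+1, p.+1)) (F := INR (4 ^ p.+1))).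
- rewrite two_INR -!mult_INR; apply: INR_eq; rewrite multE; lia.
- rewrite two_INR -mult_INR -plus_INR; apply: INR_eq; rewrite multE plusE; lia.
- rewrite -!mult_INR; apply: INR_eq; rewrite !multE; lia.
- by apply: lt_0_INR; apply/ltP.
- by apply: lt_0_INR; apply/ltP; apply: dfact_gt0.
- by apply: lt_0_INR; apply/ltP; rewrite bin_gt0; lia.
Qed.

Open Scope R_scope.
Lemma qq_dfact m : Wallis.qq m = INR (dfact (2 * m)) / INR (dfact (2 * m).-1).
Proof.
elim: m => [|m IH]; first by rewrite /= Rdiv_1_r.
rewrite [Wallis.qq _]/= IH.
rewrite (_ : (2 * m.+1)%N = (2 * m).+2); last lia.
rewrite (_ : (2 * m).+2.-1 = (2 * m).+1); last by [].
rewrite dfactSS (_ : dfact (2 * m).+1 = (2 * m).+1 * dfact (2 * m).-1)%N; last first.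
  by case: m {IH} => [|m] //; rewrite (_ : (2 * m.+1)%N = (2 * m).+2) //; lia.
have H1 := dfact_gt0 (2 * m); have H2 := dfact_gt0 (2 * m).-1.
have E1 : INR (2 * m).+2 = 2 * INR m + 2.
  by rewrite -addn2 -plusE plus_INR -multE mult_INR /=; ring.
have E2 : INR (2 * m).+1 = 2 * INR m + 1.
  by rewrite -addn1 -plusE plus_INR -multE mult_INR /=; ring.
rewrite -!multE !mult_INR E1 E2.
have P1 : 0 < INR (dfact (2 * m)) by apply: lt_0_INR; apply/ltP.
have P2 : 0 < INR (dfact (2 * m).-1) by apply: lt_0_INR; apply/ltP.
have := pos_INR m => Hm.
field; split; [rewrite multE; lra | lra].
Qed.

Lemma part2 : exists C : R, forall n : nat, (2 <= n)%N ->
      Rle (Rabs (Rminus (Rminus (closed_form n) (sqrt (Rdiv (INR n) PI))) (Rinv PI)))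
          (Rdiv C (sqrt (INR n))).
Proof.
exists 8 => n; case: n => [|[|p]] // _.
rewrite /closed_form.
rewrite (_ : (p.+2 - 1 = p.+1)%N); last lia.
rewrite (_ : (2 * p.+2 - 2 = 2 * p.+1)%N); last lia.
rewrite (_ : (2 * p.+2 - 3 = (2 * p.+1).-1)%N); last lia.
rewrite -qq_dfact.
have HPI : 3 < PI by have := PI2_3_2; lra.
have HPI4 := PI_4.
have Hm : 1 <= INR p.+1 by rewrite S_INR; have := pos_INR p; lra.
have Hn : INR p.+2 = INR p.+1 + 1 by rewrite S_INR.
have Hs := sqrt_sqrt PI ltac:(lra).
have Ha := sqrt_sqrt (INR p.+1) ltac:(lra).
have Hq := sqrt_sqrt (INR p.+2) ltac:(lra).
have Hspos : 0 < sqrt PI by apply: sqrt_lt_R0; lra.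
have Hqpos : 0 < sqrt (INR p.+2) by apply: sqrt_lt_R0; lra.
have Ha1 : 1 <= sqrt (INR p.+1).
  by rewrite -sqrt_1; apply: sqrt_le_1_alt.
have Hlow := Wallis.wallis_lower p.
have Hup := Wallis.wallis_upper p.+1.
have Hr := Wallis.qq_pos p.+1.
have := @asym PI (sqrt (INR p.+1)) (Wallis.qq p.+1) (sqrt (INR p.+2)) (sqrt PI)
  HPI HPI4 Hspos Hs Ha1 Hr.
rewrite Ha Hq.
move=> /(_ ltac:(nra) ltac:(nra) Hqpos ltac:(lra)).
rewrite sqrt_div_alt; last lra.
by rewrite /Rdiv Rmult_1_l.
Qed.
Close Scope R_scope.

Theorem mainTheorem8 :
  (forall (n : nat) (L : seq ptree),
      (2 <= n)%N ->
      List.NoDup L ->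
      (forall t : ptree, List.In t L <-> tree_size t = n) ->
      let P := sumn (map npairs L) in
      let D := sumn (map sumdist L) in
      [/\ P.*2 = 4 ^ (n - 1) - 'C(2 * n - 2, n - 1),
          D * ((n - 2)`!) ^ 2 = (2 * n - 3)`!,
          D = 'C(n, 2) * catalan (n - 1)
        & expected_len D P = closed_form n])
  /\
  (exists C : R, forall n : nat, (2 <= n)%N ->
      Rle (Rabs (Rminus (Rminus (closed_form n) (sqrt (Rdiv (INR n) PI))) (Rinv PI)))
          (Rdiv C (sqrt (INR n)))).
Proof.
split; [exact: part1 | exact: part2].
Qed.
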